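(* Let $r>1$, $p\in(0,1)$, $q=1-p$, and $z\ge 0$. Let $g_z:\mathbb{Z}_+\to\mathbb{R}$ be defined by $g_z(0)=0$ and, for $k\ge 1$, $$g_z(k)=-\sum_{j=k}^{\infty}\frac{r(r+1)\cdots(r+j-1)}{r(r+1)\cdots(r+k-1)}\,\frac{(k-1)!}{j!}\,q^{j-k}\Big[(j-z)^+-\mathbb{E}[(\mathrm{N}_{r,p}-z)^+]\Big].$$ Then for all $k\ge 0$: (i) $|g_z(k)|\le p^{-(r+1)}$; (ii) $|\Delta g_z(k)|\le 2p^{-(r+1)}-p^{-1}$.
   Context: $\mathbb{Z}_+=\{0,1,2,\ldots\}$. $x^+=\max\{x,0\}$. $\mathrm{N}_{r,p}$ denotes a negative binomial random variable with $\mathbb{P}(\mathrm{N}_{r,p}=k)=\binom{r+k-1}{k}p^rq^k=\frac{\Gamma(r+k)}{k!\,\Gamma(r)}p^rq^k$ for $k\in\mathbb{Z}_+$, where $r>1$ and $q=1-p\in(0,1)$. $\Delta g(k)=g(k+1)-g(k)$ is the forward difference. The function $g_z$ solves $q(r+k)g(k+1)-kg(k)=(k-z)^+-\mathbb{E}[(\mathrm{N}_{r,p}-z)^+]$ for $k\in\mathbb{Z}_+$. *)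

(* Defs.v *)
From Stdlib Require Import Reals.
From Coquelicot Require Import Coquelicot.
Open Scope R_scope.

(* rising factorial r (r+1) ... (r+n-1); equals Gamma(r+n)/Gamma(r) *)
Fixpoint rising (r : R) (n : nat) : R :=
  match n with
  | O => 1
  | S m => rising r m * (r + INR m)
  end.

Definition pos_part (x : R) : R := Rmax x 0.

Definition nb_pmf (r p : R) (k : nat) : R :=
  rising r k / INR (Factorial.fact k) * Rpower p r * (1 - p) ^ k.

Definition nb_stoploss (r p z : R) : R :=
  Series (fun k => nb_pmf r p k * pos_part (INR k - z)).

(* g_z(0) = 0; for k >= 1,
   g_z(k) = - sum_{j >= k} rising r j / rising r k * (k-1)!/j! * q^(j-k)
              * [ (j - z)^+ - E[(N-z)^+] ]   (summation index j = k + i) *)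
Definition g_z (r p z : R) (k : nat) : R :=
  match k with
  | O => 0
  | S _ =>
    - Series (fun i : nat =>
        rising r (k + i) / rising r k
        * (INR (Factorial.fact (k - 1)) / INR (Factorial.fact (k + i)))
        * (1 - p) ^ i
        * (pos_part (INR (k + i) - z) - nb_stoploss r p z))
  end.

(* Main.v *)
Require Import Defs.
From Stdlib Require Import Reals Lra Lia.
From Coquelicot Require Import Coquelicot.
Open Scope R_scope.

Definition ca (r : R) (n : nat) : R := rising r n / INR (Factorial.fact n).

Lemma rising_pos r n : 0 < r -> 0 < rising r n.
Proof. intros hr; induction n as [|n IH]; simpl; [lra|].
  apply Rmult_lt_0_compat; auto. pose proof (pos_INR n); lra. Qed.

Lemma ca_pos r n : 0 < r -> 0 < ca r n.
Proof. intros hr; unfold ca. apply Rdiv_lt_0_compat; [now apply rising_pos|].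
  apply INR_fact_lt_0. Qed.

Lemma ca_rec r n : INR (S n) * ca r (S n) = (r + INR n) * ca r n.
Proof. unfold ca. simpl rising. change (Factorial.fact (S n)) with ((S n) * Factorial.fact n)%nat; rewrite mult_INR.
  pose proof (INR_fact_neq_0 n). assert (INR (S n) <> 0) by (apply not_0_INR; lia).
  field. split; auto. Qed.

Lemma ca_ratio r n : 0 < r -> Rabs (ca r (S n) / ca r n) = 1 + (r - 1) * / INR (S n).
Proof. intros hr. pose proof (ca_rec r n). pose proof (ca_pos r n hr).
  pose proof (ca_pos r (S n) hr).
  assert (0 < INR (S n)) by (apply lt_0_INR; lia).
  rewrite Rabs_pos_eq.
  2:{ apply Rlt_le, Rdiv_lt_0_compat; auto. }
  rewrite S_INR in *.
  assert (E: ca r (S n) = (r + INR n) * ca r n / (INR n + 1)) by (rewrite <- H; field; lra).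
  rewrite E. field. lra. Qed.

Lemma ca_radius r : 0 < r -> CV_radius (ca r) = 1.
Proof. intros hr. replace 1 with (/1) by field.
  apply CV_radius_finite_DAlembert; [intro n; apply Rgt_not_eq, ca_pos; auto|lra|].
  apply is_lim_seq_ext with (fun n => 1 + (r - 1) * / INR (S n)).
  { intro n; symmetry; now apply ca_ratio. }
  assert (H : is_lim_seq (fun n => 1 + (r - 1) * / INR (S n)) (1 + (r-1)*0)).
  2:{ replace (1 + (r-1)*0) with 1 in H by ring. exact H. }
  apply is_lim_seq_plus'; [apply is_lim_seq_const|].
  apply is_lim_seq_mult'; [apply is_lim_seq_const|].
  apply (is_lim_seq_incr_1 (fun n => / INR n) 0).
  replace (Finite 0) with (Rbar_inv p_infty) by reflexivity.
  apply is_lim_seq_inv; [apply is_lim_seq_INR|discriminate]. Qed.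
Lemma in_radius r t : 0 < r -> Rabs t < 1 -> Rbar_lt (Rabs t) (CV_radius (ca r)).
Proof. intros hr ht. rewrite ca_radius; auto. Qed.

Lemma incr_derive r n : PS_incr_1 (PS_derive (ca r)) n = INR n * ca r n.
Proof. destruct n as [|n]; simpl PS_incr_1. simpl; change (@zero R_NormedModule) with 0; ring.
  unfold PS_derive. reflexivity. Qed.

Lemma ode r t : 0 < r -> Rabs t < 1 ->
  (1 - t) * PSeries (PS_derive (ca r)) t = r * PSeries (ca r) t.
Proof. intros hr ht.
  assert (Hr := in_radius r t hr ht).
  assert (E: PSeries (PS_derive (ca r)) t
     = PSeries (PS_plus (PS_scal r (ca r)) (PS_incr_1 (PS_derive (ca r)))) t).
  { apply PSeries_ext. intro n. unfold PS_plus, PS_scal. rewrite incr_derive. unfold PS_derive.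
    change (plus ?a ?b) with (a + b). change (scal ?a ?b) with (a * b).
    rewrite ca_rec. ring. }
  rewrite PSeries_plus in E.
  2:{ apply ex_pseries_scal; [apply Rmult_comm|]. now apply CV_radius_inside. }
  2:{ apply ex_pseries_incr_1, ex_pseries_derive. exact Hr. }
  rewrite PSeries_scal, PSeries_incr_1 in E. lra. Qed.

Lemma nb_sum r x : 0 < r -> 0 < x < 1 -> Rpower (1 - x) r * PSeries (ca r) x = 1.
Proof. intros hr hx.
  set (F := fun t => exp (r * ln (1 - t)) * PSeries (ca r) t).
  assert (F0 : F 0 = 1).
  { unfold F. rewrite PSeries_0, Rminus_0_r, ln_1, Rmult_0_r, exp_0.
    unfold ca; simpl; field. }
  unfold Rpower. change (exp (r * ln (1 - x)) * PSeries (ca r) x) with (F x).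
  rewrite <- F0. symmetry. apply eq_is_derive; [|lra].
  intros t ht. assert (htt : Rabs t < 1) by (rewrite Rabs_pos_eq; lra).
  assert (D1 : is_derive (fun t => exp (r * ln (1 - t))) t
                 (exp (r * ln (1 - t)) * (r * (-1 / (1 - t))))).
  { auto_derive; [lra|]. replace (1 + - t) with (1 - t) by ring. field. lra. }
  assert (D2 := is_derive_PSeries (ca r) t (in_radius r t hr htt)).
  assert (D := is_derive_mult _ _ t _ _ D1 D2 Rmult_comm).
  unfold F. change (@zero R_NormedModule) with 0.
  eapply is_derive_ext; [intro; reflexivity|].
  replace 0 with (plus (mult (exp (r * ln (1 - t)) * (r * (-1 / (1 - t)))) (PSeries (ca r) t))
      (mult (exp (r * ln (1 - t))) (PSeries (PS_derive (ca r)) t))).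
  exact D.
  change (plus ?a ?b) with (a + b). change (mult ?a ?b) with (a * b).
  assert (O := ode r t hr htt).
  assert (PSeries (PS_derive (ca r)) t = r * PSeries (ca r) t / (1 - t)) by (rewrite <- O; field; lra).
  rewrite H. match goal with |- ?a = ?b => change (@eq R a b) end. field. lra. Qed.
Lemma nb_eq r p j : nb_pmf r p j = Rpower p r * (ca r j * (1 - p) ^ j).
Proof. unfold nb_pmf, ca. ring. Qed.

Lemma pi_pos r p j : 0 < r -> 0 < p < 1 -> 0 < nb_pmf r p j.
Proof. intros hr hp. rewrite nb_eq. apply Rmult_lt_0_compat.
  unfold Rpower; apply exp_pos. apply Rmult_lt_0_compat. now apply ca_pos.
  apply pow_lt; lra. Qed.

Lemma pi_rec r p j : INR (S j) * nb_pmf r p (S j) = (1 - p) * (r + INR j) * nb_pmf r p j.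
Proof. rewrite !nb_eq. simpl pow.
  replace (INR (S j) * (Rpower p r * (ca r (S j) * ((1 - p) * (1 - p) ^ j))))
    with (Rpower p r * (1-p) * (1-p)^j * (INR (S j) * ca r (S j))) by ring.
  rewrite ca_rec. ring. Qed.

Lemma ex_ps_conv (a : nat -> R) x : ex_pseries a x -> ex_series (fun k => a k * x ^ k).
Proof. apply ex_series_ext. intro n. change (scal ?u ?v) with (u * v).
  rewrite pow_n_pow. match goal with |- ?a = ?b => change (@eq R a b) end. ring. Qed.

Lemma pi_ex r p : 0 < r -> 0 < p < 1 -> ex_series (nb_pmf r p).
Proof. intros hr hp.
  assert (H : ex_series (fun k => ca r k * (1-p) ^ k)).
  { apply ex_ps_conv, CV_radius_inside, in_radius; auto. rewrite Rabs_pos_eq; lra. }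
  apply (ex_series_scal_l (Rpower p r)) in H.
  revert H; apply ex_series_ext. intro n. rewrite nb_eq. reflexivity. Qed.

Lemma pi_sum r p : 0 < r -> 0 < p < 1 -> Series (nb_pmf r p) = 1.
Proof. intros hr hp.
  rewrite (Series_ext _ (fun j => Rpower p r * (ca r j * (1 - p) ^ j))) by (intro; apply nb_eq).
  rewrite Series_scal_l. change (Series (fun j => ca r j * (1 - p) ^ j)) with (PSeries (ca r) (1-p)).
  pose proof (nb_sum r (1-p) hr ltac:(lra)) as N. replace (1 - (1 - p)) with p in N by ring. exact N. Qed.

Lemma jpi_ex r p : 0 < r -> 0 < p < 1 -> ex_series (fun j => INR j * nb_pmf r p j).
Proof. intros hr hp.
  assert (H : ex_series (fun k => PS_incr_1 (PS_derive (ca r)) k * (1-p) ^ k)).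
  { apply ex_ps_conv, ex_pseries_incr_1, ex_pseries_derive, in_radius; auto.
    rewrite Rabs_pos_eq; lra. }
  apply (ex_series_scal_l (Rpower p r)) in H.
  revert H; apply ex_series_ext. intro n. rewrite nb_eq, incr_derive.
  change (scal ?u ?v) with (u * v). match goal with |- ?a = ?b => change (@eq R a b) end. ring. Qed.

Lemma tail_ex (a : nat -> R) k : ex_series a -> ex_series (fun i => a (k + i)%nat).
Proof. intro H. now apply ex_series_incr_n. Qed.

Lemma tail_id r p k : 0 < r -> 0 < p < 1 ->
  p * Series (fun i => INR (k + i) * nb_pmf r p (k + i))
  = INR k * nb_pmf r p k + (1 - p) * r * Series (fun i => nb_pmf r p (k + i)).
Proof. intros hr hp.
  assert (Eu := tail_ex _ k (pi_ex r p hr hp)).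
  assert (Ev := tail_ex _ k (jpi_ex r p hr hp)).
  assert (E1 := Series_incr_1 _ Ev). simpl in E1. rewrite Nat.add_0_r in E1.
  rewrite (Series_ext (fun k0 => INR (k + S k0) * nb_pmf r p (k + S k0))
     (fun i => ((1-p)*r) * nb_pmf r p (k + i) + (1-p) * (INR (k + i) * nb_pmf r p (k + i)))) in E1.
  2:{ intro i. rewrite Nat.add_succ_r, pi_rec. ring. }
  rewrite Series_plus, !Series_scal_l in E1.
  2:{ apply (ex_series_scal_l ((1-p)*r)) in Eu. exact Eu. }
  2:{ apply (ex_series_scal_l (1-p)) in Ev. exact Ev. }
  lra. Qed.

Lemma mu_id r p : 0 < r -> 0 < p < 1 ->
  Series (fun j => INR j * nb_pmf r p j) = (1 - p) * r / p.
Proof. intros hr hp. assert (H := tail_id r p 0 hr hp). simpl in H.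
  rewrite pi_sum in H by auto. apply (Rmult_eq_reg_l p); [|lra].
  rewrite H. field. lra. Qed.
Lemma Series_nonneg (a : nat -> R) : (forall n, 0 <= a n) -> ex_series a -> 0 <= Series a.
Proof. intros H E. replace 0 with (Series (fun n => 0 * a n)).
  apply Series_le; auto. intro n; split; [lra|]. rewrite Rmult_0_l; auto.
  rewrite Series_scal_l; ring. Qed.

Lemma mono_le (f : nat -> R) : (forall j, f j <= f (S j)) -> forall m i, f m <= f (m + i)%nat.
Proof. intros H m i; induction i as [|i IH]. rewrite Nat.add_0_r; lra.
  rewrite Nat.add_succ_r. specialize (H (m+i)%nat). lra. Qed.

Lemma mono_tail r p (f : nat -> R) k : 0 < r -> 0 < p < 1 ->
  (forall j, f j <= f (S j)) -> ex_series (fun j => nb_pmf r p j * f j) ->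
  0 <= Series (fun i => nb_pmf r p (k + i) * (f (k + i)%nat - Series (fun j => nb_pmf r p j * f j))).
Proof. intros hr hp Hm Ef.
  set (E := Series (fun j => nb_pmf r p j * f j)).
  set (w := fun j => nb_pmf r p j * f j - E * nb_pmf r p j).
  assert (Ew : ex_series w).
  { apply (ex_series_minus _ _ Ef (ex_series_scal_l E _ (pi_ex r p hr hp))). }
  assert (Sw : Series w = 0).
  { unfold w. rewrite Series_minus; auto. rewrite Series_scal_l, pi_sum by auto. unfold E; ring.
    apply (ex_series_scal_l E _ (pi_ex r p hr hp)). }
  rewrite (Series_ext _ (fun i => w (k + i)%nat)) by (intro; unfold w; ring).
  destruct k as [|k'].
  { change (0 <= Series w). rewrite Sw; lra. }
  assert (Hs := Series_incr_n w (S k') ltac:(lia) Ew). simpl Init.Nat.pred in Hs.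
  destruct (Rle_lt_dec E (f (S k'))) as [Hle|Hlt].
  - apply Series_nonneg; [|now apply ex_series_incr_n].
    intro i. unfold w. pose proof (mono_le f Hm (S k') i). pose proof (pi_pos r p (S k' + i) hr hp).
    nra.
  - assert (sum_f_R0 w k' <= 0).
    { assert (forall n, (n <= k')%nat -> sum_f_R0 w n <= 0); [|auto].
      intros n; induction n as [|n IH]; intros hn; simpl.
      + unfold w. pose proof (mono_le f Hm 0 (S k')). pose proof (pi_pos r p 0 hr hp). simpl in *. nra.
      + assert (w (S n) <= 0).
        { unfold w. pose proof (mono_le f Hm (S n) (k' - n)). pose proof (pi_pos r p (S n) hr hp).
          replace (S n + (k' - n))%nat with (S k') in * by lia. nra. }
        specialize (IH ltac:(lia)). lra. }
    lra. Qed.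
Definition fa z j := pos_part (INR j - z).
Definition fd z j := INR j - fa z j.

Lemma fa_mono z j : fa z j <= fa z (S j).
Proof. unfold fa, pos_part, Rmax. rewrite S_INR. repeat destruct Rle_dec; lra. Qed.
Lemma fd_mono z j : fd z j <= fd z (S j).
Proof. unfold fd, fa, pos_part, Rmax. rewrite S_INR. repeat destruct Rle_dec; lra. Qed.
Lemma fa_bnd z j : 0 <= z -> 0 <= fa z j <= INR j.
Proof. intro hz. pose proof (pos_INR j). unfold fa, pos_part, Rmax. repeat destruct Rle_dec; lra. Qed.
Lemma fd_bnd z j : 0 <= z -> 0 <= fd z j <= INR j.
Proof. intro hz. pose proof (pos_INR j). unfold fd, fa, pos_part, Rmax. repeat destruct Rle_dec; lra. Qed.

Lemma ex_bnd r p (f : nat -> R) : 0 < r -> 0 < p < 1 -> (forall j, 0 <= f j <= INR j) ->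
  ex_series (fun j => nb_pmf r p j * f j).
Proof. intros hr hp Hf. apply (@ex_series_le R_AbsRing R_CompleteNormedModule _ (fun j => INR j * nb_pmf r p j)); [|now apply jpi_ex].
  intro n. change (norm ?x) with (Rabs x). pose proof (pi_pos r p n hr hp). specialize (Hf n).
  rewrite Rabs_pos_eq by nra. nra. Qed.

Lemma tail_split r p (f : nat -> R) K C : 0 < r -> 0 < p < 1 -> ex_series (fun j => nb_pmf r p j * f j) ->
  Series (fun i => nb_pmf r p (K + i) * (f (K + i)%nat - C))
  = Series (fun i => nb_pmf r p (K + i) * f (K + i)%nat) - C * Series (fun i => nb_pmf r p (K + i)).
Proof. intros hr hp Ef.
  rewrite (Series_ext _ (fun i => nb_pmf r p (K + i) * f (K + i)%nat - C * nb_pmf r p (K + i))) by (intro; ring).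
  rewrite Series_minus, Series_scal_l. reflexivity.
  apply (tail_ex _ K Ef).
  apply (ex_series_scal_l C _ (tail_ex _ K (pi_ex r p hr hp))). Qed.

Lemma g_repr r p z k : 0 < r -> 0 < p < 1 ->
  g_z r p z (S k) = - (/ (INR (S k) * nb_pmf r p (S k)) *
     Series (fun i => nb_pmf r p (S k + i) * (fa z (S k + i) - nb_stoploss r p z))).
Proof. intros hr hp. unfold g_z. f_equal. rewrite <- Series_scal_l. apply Series_ext. intro i.
  replace (S k - 1)%nat with k by lia. unfold fa, nb_pmf.
  change (Factorial.fact (S k)) with (S k * Factorial.fact k)%nat. rewrite mult_INR, pow_add.
  pose proof (rising_pos r (S k) hr). pose proof (rising_pos r (S k + i) hr).
  pose proof (INR_fact_neq_0 k). pose proof (INR_fact_neq_0 (S k + i)).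
  assert (INR (S k) <> 0) by (apply not_0_INR; lia).
  assert (0 < Rpower p r) by (unfold Rpower; apply exp_pos).
  assert (0 < (1-p)^(S k)) by (apply pow_lt; lra).
  field. repeat split; try lra. Qed.

Lemma g_bounds r p z k : 0 < r -> 0 < p < 1 -> 0 <= z ->
  - / p <= g_z r p z k <= 0.
Proof. intros hr hp hz. destruct k as [|k].
  { simpl. assert (0 < / p) by (apply Rinv_0_lt_compat; lra). lra. }
  rewrite g_repr by auto.
  set (K := S k).
  assert (EA := ex_bnd r p (fa z) hr hp (fun j => fa_bnd z j hz)).
  assert (ED := ex_bnd r p (fd z) hr hp (fun j => fd_bnd z j hz)).
  set (E := nb_stoploss r p z).
  assert (HE : E = Series (fun j => nb_pmf r p j * fa z j)) by reflexivity.
  set (Ed := Series (fun j => nb_pmf r p j * fd z j)).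
  assert (HEd : Ed = (1 - p) * r / p - E).
  { unfold E, Ed, nb_stoploss. rewrite <- mu_id by auto. rewrite <- Series_minus.
    - apply Series_ext; intro. unfold fd, fa; ring.
    - apply jpi_ex; auto.
    - exact EA. }
  set (T := Series (fun i => nb_pmf r p (K + i) * (fa z (K + i) - E))).
  assert (T0 : 0 <= T) by (unfold T, E, nb_stoploss; apply (mono_tail r p (fa z)); auto; apply fa_mono).
  assert (Td : 0 <= Series (fun i => nb_pmf r p (K + i) * (fd z (K + i) - Ed)))
    by (apply mono_tail; auto; apply fd_mono).
  unfold T in *. rewrite tail_split in T0, Td |- * by auto.
  assert (TI := tail_id r p K hr hp).
  assert (SP : Series (fun i => INR (K + i) * nb_pmf r p (K + i)) =
     Series (fun i => nb_pmf r p (K + i) * fa z (K + i)) + Series (fun i => nb_pmf r p (K + i) * fd z (K + i))).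
  { rewrite <- Series_plus.
    - apply Series_ext; intro; unfold fd; ring.
    - exact (tail_ex (fun j => nb_pmf r p j * fa z j) K EA).
    - exact (tail_ex (fun j => nb_pmf r p j * fd z j) K ED). }
  rewrite SP, HEd in *.
  assert (c0 : 0 < INR K * nb_pmf r p K).
  { apply Rmult_lt_0_compat; [apply lt_0_INR; unfold K; lia| apply pi_pos; auto]. }
  set (c := INR K * nb_pmf r p K) in *.
  set (A := Series (fun i => nb_pmf r p (K + i) * fa z (K + i))) in *.
  set (B := Series (fun i => nb_pmf r p (K + i) * fd z (K + i))) in *.
  set (U := Series (fun i => nb_pmf r p (K + i))) in *.
  assert (Hup : A - E * U <= c / p).
  { apply (Rmult_le_reg_l p); [lra|]. field_simplify; [|lra].
    assert (0 <= p * (B - ((1 - p) * r / p - E) * U)) by (apply Rmult_le_pos; lra).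
    replace (p * (B - ((1 - p) * r / p - E) * U)) with (p*B - (1-p)*r*U + p*E*U) in H by (field; lra).
    lra. }
  split.
  - replace (- / p) with (- (/ c * (c / p))) by (field; lra).
    apply Ropp_le_contravar, Rmult_le_compat_l; [apply Rlt_le, Rinv_0_lt_compat; lra|exact Hup].
  - assert (0 <= / c * (A - E * U)) by (apply Rmult_le_pos; [apply Rlt_le, Rinv_0_lt_compat|]; lra).
    lra. Qed.
Lemma B_ge r p : 1 < r -> 0 < p < 1 -> / p <= Rpower p (- (r + 1)).
Proof. intros hr hp. unfold Rpower. rewrite <- (exp_ln p) at 1 by lra.
  rewrite <- exp_Ropp. assert (ln p < 0) by (rewrite <- ln_1; apply ln_increasing; lra).
  destruct (Req_dec (-(ln p)) ((-(r+1)) * ln p)) as [e|ne]; [rewrite e; lra|].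
  left. apply exp_increasing. nra. Qed.

Theorem lemma2p1 (r p z : R) (hr : 1 < r) (hp0 : 0 < p) (hp1 : p < 1)
  (hz : 0 <= z) :
  forall k : nat,
    Rabs (g_z r p z k) <= Rpower p (- (r + 1)) /\
    Rabs (g_z r p z (S k) - g_z r p z k) <= 2 * Rpower p (- (r + 1)) - / p.
Proof.
  intro k. assert (hp : 0 < p < 1) by lra. assert (hr0 : 0 < r) by lra.
  pose proof (B_ge r p hr hp).
  pose proof (g_bounds r p z k hr0 hp hz). pose proof (g_bounds r p z (S k) hr0 hp hz).
  split; apply Rabs_le; lra.
Qed.
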